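(* There is an absolute constant $c>0$ such that for any $n>16$, any $\eta>0$, and any estimator $\hat\pi$ mapping $n$ i.i.d. action-reward pairs to a distribution in $\Delta(\mathcal A)$, $$\sup_{(\mathcal A,r,\pi^{\mathrm{ref}})\in\mathrm{MAB}_2}\ \mathbb E_{\mathcal D\sim P_{\pi^{\mathrm{ref}},r}}\big[\mathrm{SubOpt}(\hat\pi;\mathcal A,r,\pi^{\mathrm{ref}})\big]\ \ge\ c\,\Big(\frac{\eta}{n}\wedge\frac{1}{\sqrt n}\Big).$$
   Context: $\mathrm{MAB}_2$ denotes the class of offline two-armed bandits: action set $\mathcal A$ with $|\mathcal A|=2$ (single context), mean reward $r:\mathcal A\to[0,1]$, reference (behavior) policy $\pi^{\mathrm{ref}}\in\Delta(\mathcal A)$ with full support. The dataset $\mathcal D\sim P_{\pi^{\mathrm{ref}},r}$ consists of $n$ i.i.d. pairs $(a_i,r_i)$ with $a_i\sim\pi^{\mathrm{ref}}$ and $r_i=r(a_i)+\varepsilon_i$ with mean-zero $1$-subgaussian noise. For $\eta>0$, $J(\pi)=\sum_a r(a)\pi(a)-\eta^{-1}\mathrm{KL}(\pi^{\mathrm{ref}}\|\pi)$, $\pi^*=\arg\max_{\pi\in\Delta(\mathcal A)}J(\pi)$, $\mathrm{SubOpt}(\pi;\mathcal A,r,\pi^{\mathrm{ref}})=J(\pi^* )-J(\pi)$. *)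

(* Defs.v *)
From mathcomp Require Import all_boot all_order all_algebra.
From mathcomp Require Import all_classical all_reals all_analysis.
Set Implicit Arguments. Unset Strict Implicit. Unset Printing Implicit Defensive.
Import Order.TTheory GRing.Theory Num.Theory.
Local Open Scope classical_set_scope.
Local Open Scope ring_scope.

(* The action set A with |A| = 2 is represented by [bool]. *)

Definition is_dist (R : realType) (p : bool -> R) : Prop :=
  (forall a, 0 <= p a) /\ p true + p false = 1.

Definition KLterm (R : realType) (pa qa : R) : \bar R :=
  if pa == 0 then 0%E
  else if qa == 0 then +oo%E
  else (pa * ln (pa / qa))%:E.

Definition KL (R : realType) (p q : bool -> R) : \bar R :=
  (\sum_(a : bool) KLterm (p a) (q a))%E.

Definition Jobj (R : realType) (eta : R) (r pref pi : bool -> R) : \bar R :=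
  ((\sum_(a : bool) r a * pi a)%:E - (eta^-1)%:E * KL pref pi)%E.

Definition Jopt (R : realType) (eta : R) (r pref : bool -> R) : \bar R :=
  ereal_sup [set Jobj eta r pref pi | pi in [set pi | is_dist pi]].

Definition SubOpt (R : realType) (eta : R) (r pref pi : bool -> R) : \bar R :=
  (Jopt eta r pref - Jobj eta r pref pi)%E.

(* Expectation of f(D) when D = ((a_1,r_1),...,(a_k,r_k)) has i.i.d. entries,
   a_i ~ pref and r_i = r(a_i) + eps_i with eps_i ~ nu independent of a_i. *)
Fixpoint Edata (R : realType) (r pref : bool -> R) (nu : probability R R)
    (k : nat) : (k.-tuple (bool * R) -> \bar R) -> \bar R :=
  match k with
  | 0 => fun f => f [tuple]
  | k'.+1 => fun f =>
      (\sum_(a : bool) (pref a)%:E *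
         \int[nu]_e Edata r pref nu (fun t : k'.-tuple (bool * R) =>
                                        f (cons_tuple (a, (r a + e)%R) t)))%E
  end.

Definition subgaussian_noise (R : realType) (nu : probability R R) : Prop :=
  nu.-integrable setT (fun x : R => x%:E) /\
  (\int[nu]_x x%:E = 0)%E /\
  forall lam : R, (\int[nu]_x (expR (lam * x))%:E <= (expR (lam ^+ 2 / 2))%:E)%E.

Definition MAB2 (R : realType) (r pref : bool -> R) (nu : probability R R) : Prop :=
  (forall a, 0 <= r a <= 1) /\ is_dist pref /\ (forall a, 0 < pref a) /\
  subgaussian_noise nu.

Definition worst_risk (R : realType) (n : nat) (eta : R)
    (pihat : n.-tuple (bool * R) -> bool -> R) : \bar R :=
  ereal_sup [set x | exists (r pref : bool -> R) (nu : probability R R),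
     MAB2 r pref nu /\
     x = Edata r pref nu (fun D => SubOpt eta r pref (pihat D))].

(* Main.v *)
Require Import Defs.
From mathcomp Require Import all_boot all_order all_algebra.
From mathcomp Require Import all_classical all_reals all_analysis.
From mathcomp Require Import measurable_realfun.
From mathcomp Require Import ring lra.
Import Order.TTheory GRing.Theory Num.Theory.
Local Open Scope classical_set_scope.
Local Open Scope ring_scope.
Set Implicit Arguments. Unset Strict Implicit.

Import HBNNSimple.


Lemma dirac_lb (R : realType) (g : R -> \bar R) (a : R) :
  (forall x, (0 <= g x)%E) -> (g a <= \int[\d_a]_x g x)%E.
Proof.
move=> g0.
have key : forall c : R, 0 <= c -> (c%:E <= g a)%E -> (c%:E <= \int[\d_a]_x g x)%E.
  move=> c c0 cg.
  have ma : measurable [set a] by exact: measurable_set1.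
  pose h := scale_nnsfun (indic_nnsfun R ma) c0.
  rewrite ge0_integralE //.
  apply: ereal_sup_ubound; exists h.
    move=> x /=; rewrite patch_setT /= measurable_realfun.mindicE.
    have [->|xa] := eqVneq x a.
      by rewrite mem_set // mulr1.
    rewrite memNset ?mulr0 //; by move=> /= xa'; move: xa; rewrite xa' eqxx.
  rewrite -integralT_nnsfun integral_dirac //.
    by rewrite diracT mul1e /= measurable_realfun.mindicE mem_set // mulr1.
  exact/measurable_realfun.measurable_EFinP/measurable_funP.
case E: (g a) => [r| |].
- apply: key; last by rewrite E.
  by rewrite -lee_fin -E.
- rewrite leye_eq; apply/eqP; apply: eq_infty => r.
  have [r0|r0] := leP 0%R r.
    by apply: key => //; rewrite E leey.
  apply: le_trans (integral_ge0 _ _); first by rewrite lee_fin ltW.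
  by move=> x _; exact: g0.
- by move: (g0 a); rewrite E.
Qed.

Lemma Edata_ge0 (R : realType) (r pref : bool -> R) (nu : probability R R) (k : nat)
  (f : k.-tuple (bool * R) -> \bar R) :
  (forall a, 0 <= pref a) -> (forall t, (0 <= f t)%E) -> (0 <= Edata r pref nu f)%E.
Proof.
move=> p0; elim: k f => [|k IH] f f0 /=; first exact: f0.
apply: sume_ge0 => a _; apply: mule_ge0; first by rewrite lee_fin.
apply: integral_ge0 => e _; exact: IH.
Qed.

Lemma nseq_cons (R : realType) (k : nat) (x : bool * R) :
  cons_tuple x (nseq_tuple k x) = nseq_tuple k.+1 x.
Proof. by apply: val_inj. Qed.

Definition d0 (R : realType) : probability R R := \d_(0:R).


Lemma Edata_lb (R : realType) (r pref : bool -> R) (k : nat)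
  (f : k.-tuple (bool * R) -> \bar R) :
  (forall a, 0 <= pref a) -> (forall t, (0 <= f t)%E) ->
  (((pref false) ^+ k)%:E * f (nseq_tuple k (false, r false)) <= Edata r pref (d0 R) f)%E.
Proof.
move=> p0; elim: k f => [|k IH] f f0 /=.
  have -> : nseq_tuple 0 (false, r false) = [tuple] by apply: val_inj.
  by rewrite expr0 mul1e.
rewrite [X in (_ <= X)%E]big_bool /=.
apply: le_trans (lee_paddl _ (lexx _)); last first.
  apply: mule_ge0; first by rewrite lee_fin.
  by apply: integral_ge0 => e _; apply: Edata_ge0.
have H := @dirac_lb R (fun e => Edata r pref (d0 R)
   (fun t => f (cons_tuple (false, r false + e) t))) (0:R)
   (fun x => @Edata_ge0 _ _ _ _ _ _ p0 (fun t => f0 _)).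
rewrite exprS EFinM -muleA.
apply: lee_wpmul2l; first by rewrite lee_fin.
apply: le_trans H.
rewrite /= addr0 -nseq_cons.
exact: (IH (fun t => f (cons_tuple (false, r false) t))).
Qed.


Lemma ln_le_sub1 (R : realType) (z : R) : 0 < z -> ln z <= z - 1.
Proof.
move=> z0; have := @le_ln1Dx R (z - 1).
rewrite addrCA subrr addr0; apply; lra.
Qed.

Lemma xlnx_ub (R : realType) (a b : R) : 0 < a -> 0 < b -> a * ln (a / b) <= a * a / b - a.
Proof.
move=> a0 b0.
have h := @ln_le_sub1 _ _ (divr_gt0 a0 b0).
have -> : a * a / b - a = a * (a / b - 1) by rewrite mulrBr mulr1 mulrA.
by rewrite ler_pM2l.
Qed.

Lemma xlnx_lb (R : realType) (a b : R) : 0 < a -> 0 < b -> a - b <= a * ln (a / b).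
Proof.
move=> a0 b0.
have h := @ln_le_sub1 _ _ (divr_gt0 b0 a0).
have e : ln (a / b) = - ln (b / a).
  apply/eqP; rewrite -subr_eq0 opprK -lnM ?posrE ?divr_gt0 //.
  have -> : a / b * (b / a) = 1 by field; rewrite ?gt_eqF.
  by rewrite ln1.
rewrite e mulrN.
have : a * ln (b / a) <= a * (b / a - 1) by rewrite ler_pM2l.
rewrite mulrBr mulr1 mulrCA divff ?gt_eqF // mulr1.
lra.
Qed.

Definition Jr (R : realType) (eta : R) (r pref q : bool -> R) : R :=
  r true * q true + r false * q false -
  eta^-1 * (pref true * ln (pref true / q true) + pref false * ln (pref false / q false)).
Definition prefp (R : realType) (p : R) : bool -> R := fun a => if a then p else 1 - p.
Definition rr (R : realType) (b : bool) : bool -> R :=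
  fun a => if a then (if b then 1 else 0) else 1/2.

Arguments Jr {R}. Arguments prefp {R}. Arguments rr {R}.

Lemma core (R : realType) (eta p x y : R) :
  0 < p -> p < y -> y < 1 -> 0 < eta -> 0 < x < 1 ->
  (y - p) / 2 - eta^-1 * ((y - p)^+2 / (y * (1 - y))) <=
  Jr eta (rr true) (prefp p) (prefp y) - Jr eta (rr true) (prefp p) (prefp x)
  + (Jr eta (rr false) (prefp p) (prefp p) - Jr eta (rr false) (prefp p) (prefp x)).
Proof.
move=> p0 py y1 e0 /andP[x0 x1].
rewrite /Jr /rr /prefp /=.
have y0 : 0 < y by lra.
have hL1 := @xlnx_lb R p x p0 x0.
have hL2 := @xlnx_lb R (1 - p) (1 - x) ltac:(lra) ltac:(lra).
have hK1 := @xlnx_ub R p y p0 y0.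
have hK2 := @xlnx_ub R (1 - p) (1 - y) ltac:(lra) ltac:(lra).
have Q : (y - p)^+2 / (y * (1 - y)) = p * p / y + (1 - p) * (1 - p) / (1 - y) - 1.
  field; apply/andP; split; rewrite ?gt_eqF //; lra.
rewrite Q divff ?gt_eqF // ln1 divff ?gt_eqF ?subr_gt0 //; last lra.
rewrite ln1 !mulr0 addr0 mulr0.
set e := eta^-1.
have e0' : 0 < e by rewrite invr_gt0.
set L1 := p * ln (p / x) in hL1 *.
set L2 := (1 - p) * ln ((1 - p) / (1 - x)) in hL2 *.
set K1 := p * ln (p / y) in hK1 *.
set K2 := (1 - p) * ln ((1 - p) / (1 - y)) in hK2 *.
have A : 0 <= e * (L1 + L2) by apply: mulr_ge0; lra.
have B : e * (K1 + K2) <= e * (p * p / y + (1 - p) * (1 - p) / (1 - y) - 1).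
  by rewrite ler_pM2l //; lra.
lra.
Qed.


Lemma Jobj_fin (R : realType) (eta : R) (r pref q : bool -> R) :
  (forall a, 0 < pref a) -> (forall a, 0 < q a) ->
  Jobj eta r pref q = (Jr eta r pref q)%:E.
Proof.
move=> p0 q0; rewrite /Jobj /KL /KLterm /Jr.
rewrite !big_bool /=.
by rewrite !gt_eqF.
Qed.

Lemma Jobj_ninf (R : realType) (eta : R) (r pref q : bool -> R) (a : bool) :
  0 < eta -> (forall a, 0 < pref a) -> q a = 0 ->
  Jobj eta r pref q = -oo%E.
Proof.
move=> e0 p0 qa; rewrite /Jobj /KL.
have -> : (\sum_(a0 : bool) KLterm (pref a0) (q a0))%E = +oo%E.
  rewrite big_bool /KLterm (gt_eqF (p0 true)) (gt_eqF (p0 false)).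
  case: a qa => -> /=; rewrite eqxx.
    by case: (q false == 0); rewrite ?addey ?addye.
  by case: (q true == 0); rewrite ?addey ?addye.
by rewrite mulry gtr0_sg ?invr_gt0 // mul1e.
Qed.


Lemma sg_d0 (R : realType) : subgaussian_noise (d0 R).
Proof.
have mid : measurable_fun setT (fun x : R => x%:E).
  exact/measurable_EFinP/measurable_id.
split; [|split].
- apply/integrableP; split => //.
  rewrite /d0 integral_dirac //.
    by rewrite diracT mul1e /= normr0 ltry.
  apply/measurable_EFinP.
  apply: continuous_measurable_fun; exact: norm_continuous.
- by rewrite /d0 integral_dirac // diracT mul1e.
- move=> lam; rewrite /d0 integral_dirac //.
    rewrite diracT mul1e mulr0 expR0 lee_fin leNgt expR_lt1 -leNgt.
    apply: divr_ge0 => //; exact: sqr_ge0.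
  apply/measurable_EFinP.
  apply: measurableT_comp; first exact: measurable_expR.
  exact: mulrl_measurable.
Qed.

Lemma Jopt_ge (R : realType) (eta : R) (r pref q : bool -> R) :
  is_dist q -> (Jobj eta r pref q <= Jopt eta r pref)%E.
Proof. by move=> dq; apply: ereal_sup_ubound; exists q. Qed.

Lemma Jopt_nninf (R : realType) (eta : R) (r pref : bool -> R) :
  (forall a, 0 < pref a) -> is_dist pref -> Jopt eta r pref != -oo%E.
Proof.
move=> p0 dp; have := Jopt_ge eta r pref dp.
rewrite (Jobj_fin eta r p0 p0).
by case: (Jopt eta r pref).
Qed.

Lemma SubOpt_inf (R : realType) (eta : R) (r pref q : bool -> R) (a : bool) :
  0 < eta -> (forall a, 0 < pref a) -> is_dist pref -> q a = 0 ->
  SubOpt eta r pref q = +oo%E.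
Proof.
move=> e0 p0 dp qa; rewrite /SubOpt (Jobj_ninf r e0 p0 qa) /=.
by rewrite addey // Jopt_nninf.
Qed.

Lemma SubOpt_ge0 (R : realType) (eta : R) (r pref q : bool -> R) :
  0 < eta -> (forall a, 0 < pref a) -> is_dist pref -> is_dist q ->
  (0 <= SubOpt eta r pref q)%E.
Proof.
move=> e0 p0 dp dq; have [q0 qs] := dq.
have [/andP[h1 h2]|] := boolP ((0 < q true) && (0 < q false)).
  have qp : forall a, 0 < q a by case.
  have hf : Jobj eta r pref q \is a fin_num by rewrite (Jobj_fin eta r p0 qp).
  by rewrite /SubOpt sube_ge0 ?hf // Jopt_ge.
rewrite negb_and -!leNgt => /orP[h|h].
  have qa : q true = 0 by apply/le_anti; rewrite h q0.
  by rewrite (SubOpt_inf r e0 p0 dp qa).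
have qa : q false = 0 by apply/le_anti; rewrite h q0.
by rewrite (SubOpt_inf r e0 p0 dp qa).
Qed.

Lemma SubOpt_lb (R : realType) (eta : R) (r pref pi q : bool -> R) :
  (forall a, 0 < pref a) -> is_dist pi -> (forall a, 0 < pi a) -> (forall a, 0 < q a) ->
  ((Jr eta r pref pi - Jr eta r pref q)%:E <= SubOpt eta r pref q)%E.
Proof.
move=> p0 dpi pi0 q0; rewrite /SubOpt (Jobj_fin eta r p0 q0) EFinB.
apply: leeB => //; rewrite -(Jobj_fin eta r p0 pi0); exact: Jopt_ge.
Qed.

Lemma prefp_pos (R : realType) (p : R) : 0 < p < 1 -> forall a, 0 < prefp p a.
Proof. by move=> /andP[h1 h2] [] /=; lra. Qed.

Lemma prefp_dist (R : realType) (p : R) : 0 <= p <= 1 -> is_dist (prefp p).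
Proof. by move=> /andP[h1 h2]; split; [case => /=; lra | rewrite /=; lra]. Qed.

Lemma MAB2_inst (R : realType) (b : bool) (p : R) : 0 < p < 1 ->
  MAB2 (rr b) (prefp p) (d0 R).
Proof.
move=> hp; split; [|split; [|split]].
- by case: b => -[] /=; apply/andP; split; lra.
- by apply: prefp_dist; case/andP: hp => h1 h2; apply/andP; split; lra.
- exact: prefp_pos.
- exact: sg_d0.
Qed.

Lemma risk_lb (R : realType) (n : nat) (eta p : R) (b : bool)
  (pihat : n.-tuple (bool * R) -> bool -> R) :
  0 < eta -> 0 < p < 1 -> (forall D, is_dist (pihat D)) ->
  ((((1 - p) ^+ n)%:E *
     SubOpt eta (rr b) (prefp p) (pihat (nseq_tuple n (false, (1/2 : R)%R))))
   <= worst_risk eta pihat)%E.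
Proof.
move=> e0 hp hd.
have p0 := prefp_pos hp.
have dp : is_dist (prefp p) by apply: prefp_dist; case/andP: hp => h1 h2; apply/andP; split; lra.
have H := @Edata_lb R (rr b) (prefp p) n
  (fun D => SubOpt eta (rr b) (prefp p) (pihat D)) (fun a => ltW (p0 a))
  (fun D => SubOpt_ge0 (rr b) e0 p0 dp (hd D)).
apply: le_trans H _.
apply: ereal_sup_ubound; exists (rr b), (prefp p), (d0 R); split => //.
exact: MAB2_inst.
Qed.

Lemma bern (R : realType) (p : R) (k : nat) : 0 <= p <= 1 -> 1 - k%:R * p <= (1 - p) ^+ k.
Proof.
move=> /andP[p0 p1]; elim: k => [|k IH]; first by rewrite expr0 mul0r subr0.
rewrite exprS -natr1.
have P0 : 0 <= (1 - p) ^+ k by apply: exprn_ge0; lra.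
have k0 : 0 <= k%:R :> R by [].
have kp : 0 <= k%:R * p * p :> R by rewrite -mulrA mulr_ge0 // mulr_ge0.
have [h|h] := leP 0 (1 - k%:R * p).
  have : (1 - k%:R * p) * (1 - p) <= (1 - p) * (1 - p) ^+ k.
    by rewrite mulrC ler_wpM2l //; lra.
  nra.
have : 0 <= (1 - p) * (1 - p) ^+ k by apply: mulr_ge0 => //; lra.
nra.
Qed.

Lemma main_lb (R : realType) (n : nat) (eta p y : R)
  (pihat : n.-tuple (bool * R) -> bool -> R) :
  0 < eta -> 0 < p -> p < y -> y < 1 -> 1/2 <= (1 - p) ^+ n ->
  (forall D, is_dist (pihat D)) ->
  0 <= (y - p) / 2 - eta^-1 * ((y - p)^+2 / (y * (1 - y))) ->
  ((((y - p) / 2 - eta^-1 * ((y - p)^+2 / (y * (1 - y)))) / 4)%:E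
     <= worst_risk eta pihat)%E.
Proof.
move=> e0 p0 py y1 hb hd.
set G := (y - p) / 2 - _ => G0.
have hp : 0 < p < 1 by apply/andP; split; lra.
have H1 := risk_lb true e0 hp hd.
have H2 := risk_lb false e0 hp hd.
move: H1 H2.
set D0 := nseq_tuple n (false, (1/2 : R)).
have [hx0 hxs] := hd D0.
set x := pihat D0 true.
have Hq : pihat D0 = prefp x.
  by apply/funext => -[] //=; rewrite /x; lra.
rewrite Hq => H1 H2.
have [/andP[x0 x1]|hx] := boolP ((0 < x) && (x < 1)); last first.
  have hpd : is_dist (prefp p) by apply: prefp_dist; apply/andP; split; lra.
  have [a qa] : exists a, prefp x a = 0.
    move: hx; rewrite negb_and -!leNgt => /orP[h|h].
      by exists true => /=; apply/le_anti; rewrite h hx0.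
    exists false => /=; have := hx0 false; rewrite Hq /= => h'.
    lra.
  rewrite (SubOpt_inf (rr true) e0 (prefp_pos hp) hpd qa) in H1.
  rewrite mulry gtr0_sg ?mul1e in H1; last by apply: exprn_gt0; lra.
  by apply: le_trans (leey _) H1.
have hx : 0 < x < 1 by apply/andP.
have qpos := prefp_pos hx.
have ppos := prefp_pos hp.
have hyp : 0 < y < 1 by apply/andP; split; lra.
have S1 := SubOpt_lb eta (rr true) ppos
   (prefp_dist (ltac:(apply/andP; split; lra) : 0 <= y <= 1)) (prefp_pos hyp) qpos.
have S2 := SubOpt_lb eta (rr false) ppos
   (prefp_dist (ltac:(apply/andP; split; lra) : 0 <= p <= 1)) ppos qpos.
have C := core p0 py y1 e0 hx.
set d1 := Jr eta (rr true) (prefp p) (prefp y) - Jr eta (rr true) (prefp p) (prefp x) in S1 C.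
set d2 := Jr eta (rr false) (prefp p) (prefp p) - Jr eta (rr false) (prefp p) (prefp x) in S2 C.
set P := (1 - p) ^+ n in H1 H2 hb.
have P0 : 0 <= P by lra.
have A1 : ((P * d1)%:E <= worst_risk eta pihat)%E.
  by apply: le_trans H1; rewrite EFinM; apply: lee_wpmul2l; rewrite ?lee_fin.
have A2 : ((P * d2)%:E <= worst_risk eta pihat)%E.
  by apply: le_trans H2; rewrite EFinM; apply: lee_wpmul2l; rewrite ?lee_fin.
have C' : G <= d1 + d2 by exact: C.
have m1 : 0 <= P * (d1 + d2 - G) by apply: mulr_ge0; lra.
have m2 : 0 <= (P - 1/2) * G by apply: mulr_ge0; lra.
have hsum : G / 2 <= P * d1 + P * d2 by nra.
have [h|h] := leP (G / 4) (P * d1).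
  by apply: le_trans A1; rewrite lee_fin.
apply: le_trans A2; rewrite lee_fin; lra.
Qed.

Theorem theoremE3 (R : realType) :
  exists c : R, 0 < c /\
  forall (n : nat), (16 < n)%N ->
  forall eta : R, 0 < eta ->
  forall pihat : n.-tuple (bool * R) -> bool -> R,
    (forall D, is_dist (pihat D)) ->
    (forall a : bool, measurable_fun setT (fun D => pihat D a)) ->
    ((c * Num.min (eta / n%:R) (1 / Num.sqrt n%:R))%:E <= worst_risk eta pihat)%E.
Proof.
exists (1/512); split; first lra.
move=> n hn eta e0 pihat hd _.
set N : R := n%:R.
have N16 : 16 < N by rewrite /N ltr_nat.
set p : R := 1 / (2 * N).
have pN : p * N = 1/2 by rewrite /p; field; rewrite gt_eqF //; lra.
have p0 : 0 < p by rewrite /p divr_gt0 //; lra.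
have p32 : p < 1/32 by nra.
have hb : 1/2 <= (1 - p) ^+ n.
  apply: le_trans (bern n _); last by apply/andP; split; lra.
  rewrite -/N; lra.
set m := Num.min (eta / N) (1 / Num.sqrt N).
have m1 : m <= eta / N by rewrite /m ge_min lexx.
have m2 : m <= 1 / Num.sqrt N by rewrite /m ge_min lexx orbT.
clearbody m.
have eN : eta / N = 2 * (p * eta).
  rewrite /p; field; rewrite gt_eqF //; lra.
have [eta16|eta16] := leP eta 16.
- set t := p * eta / 16.
  have t0 : 0 < t by rewrite /t divr_gt0 // mulr_gt0.
  have ty : t <= p by rewrite /t ler_pdivrMr //; nra.
  set y := p + t.
  have yp : y - p = t by rewrite /y; ring.
  have yy : p * (1/2) <= y * (1 - y) by rewrite /y; nra.
  have Q : (y - p)^+2 / (y * (1 - y)) <= t ^+ 2 / (p * (1/2)).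
    have pp : p * (1/2) \is Num.pos by rewrite posrE mulr_gt0.
    have yq : y * (1 - y) \is Num.pos.
      by rewrite posrE; apply: lt_le_trans yy; rewrite mulr_gt0.
    by rewrite yp ler_wpM2l ?sqr_ge0 // lef_pV2.
  have Q2 : eta^-1 * ((y - p)^+2 / (y * (1 - y))) <= t / 8.
    apply: le_trans (_ : eta^-1 * (t ^+ 2 / (p * (1/2))) <= _).
      by rewrite ler_wpM2l // invr_ge0 ltW.
    rewrite le_eqVlt; apply/orP; left; apply/eqP; rewrite /t; field.
    by apply/andP; split; rewrite gt_eqF.
  have G0 : 0 <= (y - p) / 2 - eta^-1 * ((y - p)^+2 / (y * (1 - y))).
    by rewrite yp; rewrite yp in Q2; lra.
  have := main_lb e0 p0 (ltac:(rewrite /y; lra) : p < y)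
    (ltac:(rewrite /y; lra) : y < 1) hb hd G0.
  apply: le_trans; rewrite lee_fin.
  rewrite yp in Q2 *.
  have : 1/512 * m <= 1/512 * (2 * (p * eta)) by rewrite ler_wpM2l // -eN.
  have tp : 16 * t = p * eta by rewrite /t; field.
  lra.
- set y := p + 1/4.
  have yy : 1/8 <= y * (1 - y) by rewrite /y; nra.
  have yp : y - p = 1/4 by rewrite /y; ring.
  have Q : (y - p)^+2 / (y * (1 - y)) <= 1/2.
    rewrite yp ler_pdivrMr; last lra.
    lra.
  have Q0 : 0 <= (y - p)^+2 / (y * (1 - y)).
    by rewrite divr_ge0 ?sqr_ge0 //; lra.
  have ei : eta^-1 <= 1/16.
    rewrite (_ : 1/16 = 16^-1 :> R); last by rewrite div1r.
    by rewrite lef_pV2 ?posrE //; lra.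
  have Q2 : eta^-1 * ((y - p)^+2 / (y * (1 - y))) <= 1/32.
    apply: le_trans (_ : 1/16 * (1/2) <= _); last lra.
    by apply: ler_pM => //; rewrite invr_ge0 ltW.
  have G0 : 0 <= (y - p) / 2 - eta^-1 * ((y - p)^+2 / (y * (1 - y))).
    rewrite yp in Q2 *; set E := eta^-1 * _ in Q2 *; clear -Q2; lra.
  have := main_lb e0 p0 (ltac:(rewrite /y; lra) : p < y)
    (ltac:(rewrite /y; lra) : y < 1) hb hd G0.
  apply: le_trans; rewrite lee_fin.
  have s1 : Num.sqrt 1 <= Num.sqrt N by rewrite ler_sqrt; lra.
  rewrite sqrtr1 in s1.
  have s2 : 1 / Num.sqrt N <= 1 by rewrite ler_pdivrMr; lra.
  have : 1/512 * m <= 1/512 by clear -m2 s2; lra.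
  rewrite yp in Q2 *; set E := eta^-1 * _ in Q2 *; clear -Q2; lra.
Qed.
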